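(* For every nonzero $\lambda\in\mathbb{C}$, the function $f_\lambda(t)=\frac{1}{(1-\lambda t)(1-\lambda^{-1}t)}$ is symplectic at $t=1$ of order $2$.
   Context: A formal power series $\varphi(x)=\sum_{i\ge0}\gamma_i x^i\in\mathbb{C}[[x]]$ is called symplectic if for every $m\ge1$ one has $\sum_{k=0}^{m-1}(-1)^k\binom{m-1}{k}\gamma_{m+k}=0$. A meromorphic function $\psi(t)$ whose pole at $t=a$ has order at most $d$ is called symplectic at $a$ of order $d$ if the formal power series $x^d\psi(a-x)\in\mathbb{C}[[x]]$ is symplectic. *)

(* Defs.v *)
From HB Require Import structures.
From mathcomp Require Import all_boot all_order all_algebra.
From mathcomp Require Import complex.
Set Implicit Arguments. Unset Strict Implicit. Unset Printing Implicit Defensive.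
Import Order.TTheory GRing.Theory Num.Theory.
Local Open Scope ring_scope.

(* A formal power series in C[[x]] is represented by its coefficient
   sequence  gamma : nat -> C  (gamma i = coefficient of x^i). *)

Definition symplectic (C : comRingType) (gamma : nat -> C) : Prop :=
  forall m : nat, (0 < m)%N ->
    \sum_(k < m) (-1) ^+ k * ('C(m.-1, k))%:R * gamma (m + k)%N = 0.

Definition ser_mul_poly (C : comRingType) (gamma : nat -> C) (p : {poly C})
  : nat -> C :=
  fun n => \sum_(k < n.+1) gamma k * p`_(n - k).

Definition ser_of_poly (C : comRingType) (p : {poly C}) : nat -> C :=
  fun n => p`_n.

(* The rational function psi = P/Q (Q <> 0) is symplectic at a of order d:
   x^d psi(a - x) = x^d P(a-x) / Q(a-x) lies in C[[x]], i.e. there is a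
   power series gamma with gamma * Q(a-x) = x^d P(a-x) in C[[x]] (this is
   exactly "the pole at a has order at most d"), and this power series
   (unique, as C[[x]] is a domain and Q(a-x) <> 0) is symplectic. *)
Definition rat_symplectic_at (C : comRingType) (P Q : {poly C}) (a : C)
  (d : nat) : Prop :=
  let Qa := Q \Po (a%:P - 'X) in
  let Pa := 'X^d * (P \Po (a%:P - 'X)) in
  (exists gamma : nat -> C, ser_mul_poly gamma Qa = ser_of_poly Pa) /\
  (forall gamma : nat -> C, ser_mul_poly gamma Qa = ser_of_poly Pa ->
     symplectic gamma).

(* Main.v *)
Require Import Defs.
From HB Require Import structures.
From mathcomp Require Import all_boot all_order all_algebra.
From mathcomp Require Import complex ring.
From Stdlib Require Import FunctionalExtensionality.
Import Order.TTheory GRing.Theory Num.Theory.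
Local Open Scope ring_scope.

Section S.
Variable C : fieldType.

Lemma Qa_eq (l : C) (hl : l != 0) :
  ((1 - l *: 'X) * (1 - l^-1 *: 'X) : {poly C}) \Po (1%:P - 'X) =
  ((1-l)*(1-l^-1))%:P - ((1-l)*(1-l^-1)) *: 'X + 'X^2.
Proof.
rewrite comp_polyM !comp_polyB !comp_polyZ comp_polyX -polyC1 comp_polyC.
rewrite -!mul_polyC !rmorphM !rmorphB /= polyC1.
have h : l%:P * l^-1%:P = 1 :> {poly C} by rewrite -rmorphM mulfV // polyC1.
move: h; set a := l%:P; set b := l^-1%:P => h.
apply/eqP; rewrite -subr_eq0; apply/eqP.
match goal with |- ?u - ?v = 0 => have -> : u - v = (1 - a * b) * ('X - 'X^2) by ring end.
by rewrite h subrr mul0r.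
Qed.

Definition D (g : nat -> C) p j := \sum_(k < p.+1) (-1)^+k * ('C(p,k))%:R * g (j+k)%N.

Lemma DS g p j : D g p.+1 j = D g p j - D g p j.+1.
Proof.
have E : D g p j = \sum_(k < p.+2) (-1)^+k * ('C(p,k))%:R * g (j+k)%N.
  by rewrite big_ord_recr /= bin_small // mulr0 mul0r addr0.
rewrite E /D big_ord_recl [in RHS]big_ord_recl /= !bin0 !addn0 -addrA; congr (_ + _).
rewrite -sumrB; apply: eq_bigr => k _.
rewrite binS natrD exprS /bump /= add1n addnS addSn; ring.
Qed.

Lemma smp_rev (g : nat -> C) p n : ser_mul_poly g p n = \sum_(j < n.+1) g (n - j)%N * p`_j.
Proof.
rewrite /ser_mul_poly (reindex_inj rev_ord_inj) /=; apply: eq_bigr => j _.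
by rewrite subSS subKn // -ltnS.
Qed.

Lemma conv (g : nat -> C) q n :
  ser_mul_poly g (q%:P - q *: 'X + 'X^2) n =
  match n with 0 => q * g 0%N | 1 => q * g 1%N - q * g 0%N
  | n'.+2 => q * g n'.+2 - q * g n'.+1 + g n' end.
Proof.
rewrite smp_rev; case: n => [|[|n]].
- by rewrite big_ord1 /= !coefE /=; ring.
- by rewrite !big_ord_recl big_ord0 /= !coefE /=; ring.
rewrite !big_ord_recl big1 /=.
  by rewrite !coefE /= subn0 !subSS subn0 /bump /= subn0; ring.
by move=> i _; rewrite !coefE /=; ring.
Qed.

Fixpoint hh (q : C) n : C * C := match n with 0 => (0,0)
  | n'.+1 => let uv := hh q n' in (uv.2, ((n' == 0)%:R + q * uv.2 - uv.1) / q) end.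

Lemma main_gen (q : C) :
  (exists g : nat -> C, ser_mul_poly g (q%:P - q *: 'X + 'X^2) = ser_of_poly 'X^2) /\
  (forall g : nat -> C, ser_mul_poly g (q%:P - q *: 'X + 'X^2) = ser_of_poly 'X^2 ->
     symplectic g).
Proof.
have Pa n : ser_of_poly ('X^2 : {poly C}) n = (n == 2)%:R by rewrite /ser_of_poly coefXn.
split.
  have [->|q0] := eqVneq q 0.
    exists (fun n => (n == 0)%:R); apply: functional_extensionality => n; rewrite conv Pa.
    by case: n => [|[|n]] /=; rewrite ?mul0r ?subr0 ?add0r.
  exists (fun n => (hh q n).1); apply: functional_extensionality => n; rewrite conv Pa.
  case: n => [|[|n]] /=; rewrite ?mulr0 ?subr0 //.
  rewrite mulrCA mulfV // mulr1; ring.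
move=> g Hg.
have E n : ser_mul_poly g (q%:P - q *: 'X + 'X^2) n = (n == 2)%:R by rewrite Hg Pa.
have [q0|q0] := eqVneq q 0.
  have gz j : g j.+1 = 0.
    by have := E j.+3; rewrite conv q0 !mul0r subrr add0r.
  move=> [//|m] _; apply: big1 => k _.
  by rewrite addSn gz mulr0.
have g0 : g 0%N = 0 by apply/eqP; have := E 0%N; rewrite conv /= => /eqP; rewrite mulf_eq0 (negbTE q0).
have g1 : g 1%N = 0.
  by apply/eqP; have := E 1%N; rewrite conv /= g0 mulr0 subr0 => /eqP; rewrite mulf_eq0 (negbTE q0).
have rel i : q * (g i.+2 - g i.+3) = g i.+1.
  have := E i.+3; rewrite conv /= mulr0n => h.
  apply/eqP; rewrite -subr_eq0 -oppr_eq0; apply/eqP; rewrite -[RHS]h; ring.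
have cl p i : q ^+ p * D g p (i + p).+1 = g i.+1.
  elim: p i => [|p IH] i.
    by rewrite /D big_ord1 /= bin0 expr0 !mul1r addn0 addn0.
  rewrite DS exprS -mulrA mulrBr.
  have e1 : (i + p.+1).+1 = (i.+1 + p).+1 by rewrite addnS addSn.
  have e2 : (i + p.+1).+2 = (i.+2 + p).+1 by rewrite addnS !addSn.
  rewrite e2 e1 !IH.
  exact: rel.
move=> [//|p] _.
have := cl p 0%N; rewrite add0n g1 => /eqP; rewrite mulf_eq0 expf_eq0 (negbTE q0) andbF /=.
by move/eqP.
Qed.
End S.

Local Open Scope complex_scope.

Theorem lemma6p1 (R : rcfType) (lambda : R[i]) (hl : lambda != 0) :
  rat_symplectic_at 1
    ((1 - lambda *: 'X) * (1 - lambda^-1 *: 'X) : {poly R[i]}) 1 2.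
Proof.
have e : (1 : {poly R[i]}) \Po (1%:P - 'X) = 1 by rewrite -polyC1 comp_polyC.
rewrite /rat_symplectic_at Qa_eq // e mulr1.
exact (@main_gen (R[i] : fieldType) ((1 - lambda) * (1 - lambda^-1))).
Qed.
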